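(* For every $n\ge1$ and every choice of coefficients, there exist real constants $\tau_{i,j},\sigma_{i,j}$ ($0\le i+j\le n$), depending on the coefficients, and a real polynomial $\phi$ of degree at most $2n+\frac{3+(-1)^n}{2}$ such that for all $h\in(0,+\infty)$, $$M(h)=\sum_{0\le i+j\le n}\tau_{i,j}I_{i,j}(h)+\sum_{0\le i+j\le n}\sigma_{i,j}J_{i,j}(h)+\phi\big(u(h)\big).$$
   Context: Fix an integer $n\ge 1$ and real coefficients $a^k_{i,j},b^k_{i,j}$ ($k=1,2,3,4$; $i+j\le n$), $f_k=\sum_{0\le i+j\le n}a^k_{i,j}x^iy^j$, $g_k=\sum_{0\le i+j\le n}b^k_{i,j}x^iy^j$. For $h>0$ let $u(h)=\sqrt{(\sqrt{1+4h}-1)/2}$ (so $u^4+u^2=h$), $\Gamma_h$ the circle $x^2+y^2=h$, and $A=(u,u^2)$, $B=(u,-u^2)$, $C=(-u,-u^2)$, $D=(-u,u^2)$. Let $\widehat{AB},\widehat{BC},\widehat{CD},\widehat{DA}$ be the arcs of $\Gamma_h$ traversed clockwise from $A$ to $B$ (through $(\sqrt h,0)$), $B$ to $C$ (through $(0,-\sqrt h)$), $C$ to $D$ (through $(-\sqrt h,0)$), $D$ to $A$ (through $(0,\sqrt h)$). Define $$M(h)=\int_{\widehat{AB}}g_1dx-f_1dy+\int_{\widehat{BC}}g_2dx-f_2dy+\int_{\widehat{CD}}g_3dx-f_3dy+\int_{\widehat{DA}}g_4dx-f_4dy,$$ the first order Melnikov function of the system $\dot x=y+\varepsilon f_k,\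 \dot y=-x+\varepsilon g_k$ on the regions $R_1=\{x>0,-x^2<y<x^2\}$, $R_2=\{y<-x^2\}$, $R_3=\{x<0,-x^2<y<x^2\}$, $R_4=\{y>x^2\}$. For integers $i,j\ge0$, $I_{i,j}(h)=\int_{\widehat{AB}}x^iy^jdx$ and $J_{i,j}(h)=\int_{\widehat{BC}}x^iy^jdx$. *)

(* Defs.v *)
From Stdlib Require Import Reals Lra Classical ClassicalEpsilon ClassicalDescription.
Open Scope R_scope.

(* Oriented Riemann integral of f from a to b (a > b allowed, giving the
   negative of the integral from b to a); 0 if f is not Riemann integrable.
   The value RiemannInt pr does not depend on the proof pr. *)
Definition Rint (f : R -> R) (a b : R) : R :=
  match excluded_middle_informative
          (exists v : R, exists pr : Riemann_integrable f a b, RiemannInt pr = v) with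
  | left H => proj1_sig (constructive_indefinite_description _ H)
  | right _ => 0
  end.

Definition poly2 (n : nat) (c : nat -> nat -> R) (x y : R) : R :=
  sum_f_R0 (fun i => sum_f_R0 (fun j =>
     if (i + j <=? n)%nat then c i j * x ^ i * y ^ j else 0) n) n.

(* u(h) = sqrt((sqrt(1+4h) - 1)/2), so that u^4 + u^2 = h. *)
Definition uh (h : R) : R := sqrt ((sqrt (1 + 4 * h) - 1) / 2).

(* Polar angle of A = (u, u^2) on the circle x^2+y^2 = h (radius sqrt h):
   tan alpha = u^2/u = u. *)
Definition alpha (h : R) : R := atan (uh h).

Definition arc_int (P Q : R -> R -> R) (h t0 t1 : R) : R :=
  Rint (fun t =>
          let r := sqrt h in
          let x := r * cos t in
          let y := r * sin t in
          P x y * (- r * sin t) + Q x y * (r * cos t)) t0 t1.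

(* Angular parameter ranges of the clockwise arcs (theta decreasing):
   AB : alpha -> -alpha          (through (sqrt h, 0), theta = 0)
   BC : -alpha -> alpha - PI     (through (0,-sqrt h), theta = -PI/2)
   CD : alpha - PI -> -PI - alpha (through (-sqrt h,0), theta = -PI)
   DA : -PI - alpha -> alpha - 2 PI (through (0, sqrt h), theta = -3PI/2) *)

Definition arc_gf (f g : R -> R -> R) (h t0 t1 : R) : R :=
  arc_int g (fun x y => - f x y) h t0 t1.

(* First order Melnikov function; a k, b k (k = 1..4) are the coefficient
   families of f_k, g_k. *)
Definition Melnikov (n : nat) (a b : nat -> nat -> nat -> R) (h : R) : R :=
  let al := alpha h in
  arc_gf (poly2 n (a 1%nat)) (poly2 n (b 1%nat)) h al (- al)
  + arc_gf (poly2 n (a 2%nat)) (poly2 n (b 2%nat)) h (- al) (al - PI)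
  + arc_gf (poly2 n (a 3%nat)) (poly2 n (b 3%nat)) h (al - PI) (- PI - al)
  + arc_gf (poly2 n (a 4%nat)) (poly2 n (b 4%nat)) h (- PI - al) (al - 2 * PI).

Definition Iij (i j : nat) (h : R) : R :=
  arc_int (fun x y => x ^ i * y ^ j) (fun _ _ => 0) h (alpha h) (- alpha h).
Definition Jij (i j : nat) (h : R) : R :=
  arc_int (fun x y => x ^ i * y ^ j) (fun _ _ => 0) h (- alpha h) (alpha h - PI).

Definition sum_tri (n : nat) (F : nat -> nat -> R) : R :=
  sum_f_R0 (fun i => sum_f_R0 (fun j => if (i + j <=? n)%nat then F i j else 0) n) n.

(* 2n + (3 + (-1)^n)/2 : equals 2n+2 for n even, 2n+1 for n odd. *)
Definition phi_deg (n : nat) : nat := (2 * n + (if Nat.even n then 2 else 1))%nat.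

(* Main.v *)
Require Import Defs.
From Stdlib Require Import Reals Lra Lia ClassicalDescription ClassicalEpsilon.
From Coquelicot Require Import Coquelicot.
Open Scope R_scope.

Lemma Rint_is f a b v : is_RInt f a b v -> Rint f a b = v.
Proof.
  intro H. unfold Rint.
  destruct (ClassicalDescription.excluded_middle_informative
     (exists v : R, exists pr : Riemann_integrable f a b, RiemannInt pr = v)) as [E|N].
  - destruct (constructive_indefinite_description _ E) as [w [pr Hw]]. simpl.
    rewrite <- Hw, <- RInt_Reals. apply is_RInt_unique; exact H.
  - exfalso. apply N. exists v. exists (ex_RInt_Reals_0 _ _ _ (ex_intro _ v H)).
    rewrite <- RInt_Reals. apply is_RInt_unique. exact H.
Qed.

Definition mdx (i j : nat) (h t : R) : R :=
  (sqrt h * cos t)^i * (sqrt h * sin t)^j * (- sqrt h * sin t).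
Definition mdy (i j : nat) (h t : R) : R :=
  (sqrt h * cos t)^i * (sqrt h * sin t)^j * (sqrt h * cos t).
Definition K (i j : nat) (h a b : R) : R := RInt (mdx i j h) a b.
Definition Ev (i j : nat) (h t : R) : R := (sqrt h * cos t)^i * (sqrt h * sin t)^(S j).

Lemma is_RInt_val (f : R -> R) a b v w : is_RInt f a b v -> v = w -> is_RInt f a b w.
Proof. intros H ->; exact H. Qed.

Lemma is_K i j h a b : is_RInt (mdx i j h) a b (K i j h a b).
Proof.
  assert (E : ex_RInt (mdx i j h) a b).
  { apply (ex_RInt_continuous (V:=R_CompleteNormedModule)). intros z _.
    apply (ex_derive_continuous (K:=R_AbsRing) (V:=CompleteNormedModule.NormedModule _ R_CompleteNormedModule)). unfold mdx. auto_derive. auto. }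
  exact (RInt_correct _ _ _ E).
Qed.

Lemma is_L i j h a b : is_RInt (mdy i j h) a b
   ((Ev i j h b - Ev i j h a) / (INR j + 1) - INR i / (INR j + 1) * K (pred i) (S j) h a b).
Proof.
  set (r := sqrt h).
  set (df := fun t => r * (- sin t) * (INR i * (r * cos t) ^ Init.Nat.pred i) *
      (r * sin t * (r * sin t) ^ j) + (r * cos t) ^ i * (r * cos t * ((INR j + 1) * (r * sin t) ^ j))).
  assert (HD : is_RInt df a b (minus (Ev i j h b) (Ev i j h a))).
  { apply (is_RInt_derive (V:=R_CompleteNormedModule)).
    - intros x _. unfold Ev, df. fold r. auto_derive. auto.
      destruct j; simpl; ring.
    - intros x _. apply (ex_derive_continuous (K:=R_AbsRing) (V:=CompleteNormedModule.NormedModule _ R_CompleteNormedModule)). unfold df. auto_derive. auto. }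
  assert (HJ : INR j + 1 <> 0) by (pose proof (pos_INR j); lra).
  pose proof (is_RInt_minus _ _ _ _ _ _ (is_RInt_scal _ _ _ (1 / (INR j + 1)) _ HD)
                 (is_RInt_scal _ _ _ (INR i / (INR j + 1)) _ (is_K (pred i) (S j) h a b))) as H.
  eapply is_RInt_ext; [| eapply is_RInt_val; [exact H|]].
  - intros x _. unfold minus, plus, opp, scal; simpl. unfold mult; simpl.
    unfold mdy, mdx, df. fold r. simpl. field. exact HJ.
  - unfold minus, plus, opp, scal; simpl. unfold mult; simpl. field. exact HJ.
Qed.

Lemma is_RInt_sum (F : nat -> R -> R) (v : nat -> R) N a b :
  (forall i, (i <= N)%nat -> is_RInt (F i) a b (v i)) ->
  is_RInt (fun t => sum_f_R0 (fun i => F i t) N) a b (sum_f_R0 v N).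
Proof.
  induction N as [|N IH]; intro H.
  - simpl. apply H. lia.
  - simpl. apply (is_RInt_plus (V:=R_NormedModule)).
    + apply IH. intros; apply H; lia.
    + apply H; lia.
Qed.

Lemma sum_lin2 (F G : nat -> R) p q N :
  sum_f_R0 F N * p + - sum_f_R0 G N * q = sum_f_R0 (fun i => F i * p - G i * q) N.
Proof. induction N as [|N IH]; simpl. ring. rewrite <- IH. ring. Qed.

Lemma sum_lin2' (F G : nat -> R) p q N :
  sum_f_R0 F N * p - sum_f_R0 G N * q = sum_f_R0 (fun i => F i * p - G i * q) N.
Proof. induction N as [|N IH]; simpl. ring. rewrite <- IH. ring. Qed.

Definition Lv (i j : nat) (h a b : R) : R :=
  (Ev i j h b - Ev i j h a) / (INR j + 1) - INR i / (INR j + 1) * K (pred i) (S j) h a b.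

Lemma arc_decomp n (A B : nat -> nat -> R) h t0 t1 :
  arc_gf (poly2 n A) (poly2 n B) h t0 t1 =
  sum_tri n (fun i j => B i j * K i j h t0 t1 - A i j * Lv i j h t0 t1).
Proof.
  apply Rint_is.
  eapply is_RInt_ext; [| apply is_RInt_sum; intros i _; apply is_RInt_sum; intros j _;
     apply (fun H => H : is_RInt (fun t => if (i + j <=? n)%nat then B i j * mdx i j h t - A i j * mdy i j h t else 0) t0 t1 _)].
  - intros x _. simpl. unfold poly2. symmetry. rewrite sum_lin2. apply sum_eq. intros i _.
    rewrite sum_lin2'. apply sum_eq. intros j _.
    destruct (i + j <=? n)%nat; unfold mdx, mdy; ring.
  - destruct (i + j <=? n)%nat.
    + apply (is_RInt_minus (V:=R_NormedModule)); apply (is_RInt_scal (V:=R_NormedModule)).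
      apply is_K. apply is_L.
    + eapply is_RInt_val. apply (is_RInt_const (V:=R_NormedModule)). unfold scal; simpl; unfold mult; simpl; ring.
Qed.

Lemma sum_ext (F G : nat -> R) N : (forall i, F i = G i) -> sum_f_R0 F N = sum_f_R0 G N.
Proof. intro H. apply sum_eq. intros; apply H. Qed.

Lemma sum_tri_ext n (F G : nat -> nat -> R) : (forall i j, F i j = G i j) -> sum_tri n F = sum_tri n G.
Proof. intro H. unfold sum_tri. apply sum_ext; intro i. apply sum_ext; intro j. rewrite H. reflexivity. Qed.

Lemma sum_tri_plus n F G : sum_tri n F + sum_tri n G = sum_tri n (fun i j => F i j + G i j).
Proof.
  unfold sum_tri. rewrite <- sum_plus. apply sum_ext; intro i. rewrite <- sum_plus.
  apply sum_ext; intro j. destruct (i + j <=? n)%nat; ring.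
Qed.

Lemma sum_scal c (F : nat -> R) N : c * sum_f_R0 F N = sum_f_R0 (fun i => c * F i) N.
Proof. induction N; simpl. ring. rewrite <- IHN. ring. Qed.

Lemma sum_tri_scal n c F : c * sum_tri n F = sum_tri n (fun i j => c * F i j).
Proof.
  unfold sum_tri. rewrite sum_scal. apply sum_ext; intro i. rewrite sum_scal.
  apply sum_ext; intro j. destruct (i + j <=? n)%nat; ring.
Qed.

Lemma sum_zero N : sum_f_R0 (fun _ => 0) N = 0.
Proof. induction N; simpl. ring. rewrite IHN. ring. Qed.

Lemma sum_tri_zero n : sum_tri n (fun _ _ => 0) = 0.
Proof.
  unfold sum_tri. transitivity (sum_f_R0 (fun _ => 0) n); [|apply sum_zero].
  apply sum_ext; intro i.
  transitivity (sum_f_R0 (fun _ => 0) n); [|apply sum_zero].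
  apply sum_ext; intro j. destruct (i + j <=? n)%nat; reflexivity.
Qed.

Lemma sum_delta (x : R) i N :
  sum_f_R0 (fun k => if (k =? i)%nat then x else 0) N = if (i <=? N)%nat then x else 0.
Proof.
  induction N as [|N IH].
  - simpl. destruct i; simpl; reflexivity.
  - change (sum_f_R0 ?f (S N)) with (sum_f_R0 f N + f (S N)). cbv beta. rewrite IH. destruct (Nat.leb_spec i N); destruct (Nat.eqb_spec (S N) i);
      destruct (Nat.leb_spec i (S N)); try lia; ring.
Qed.

Lemma sum_tri_delta n i j F : (i + j <= n)%nat ->
  sum_tri n (fun i' j' => (if (andb (i' =? i)%nat (j' =? j)%nat) then 1 else 0) * F i' j') = F i j.
Proof.
  intro Hij. unfold sum_tri.
  transitivity (sum_f_R0 (fun i' => if (i' =? i)%nat then F i j else 0) n).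
  - apply sum_ext; intro i'.
    transitivity (sum_f_R0 (fun j' => if (j' =? j)%nat then (if (i' =? i)%nat then F i j else 0) else 0) n).
    + apply sum_ext; intro j'.
      destruct (Nat.eqb_spec i' i); destruct (Nat.eqb_spec j' j).
      * subst i' j'. simpl. destruct (Nat.leb_spec (i + j) n); [ring | lia].
      * simpl. destruct (i' + j' <=? n)%nat; ring.
      * simpl. destruct (i' + j' <=? n)%nat; ring.
      * simpl. destruct (i' + j' <=? n)%nat; ring.
    + rewrite sum_delta. destruct (Nat.leb_spec j n); [reflexivity | lia].
  - rewrite sum_delta. destruct (Nat.leb_spec i n); [reflexivity | lia].
Qed.

Definition Repr n (F : R -> R) : Prop :=
  exists (tau sigma : nat -> nat -> R) (phi : nat -> R),
    forall h : R, 0 < h ->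
      F h = sum_tri n (fun i j => tau i j * Iij i j h)
          + sum_tri n (fun i j => sigma i j * Jij i j h)
          + sum_f_R0 (fun k => phi k * (uh h) ^ k) (phi_deg n).

Lemma Repr_ext n F G : (forall h, 0 < h -> F h = G h) -> Repr n G -> Repr n F.
Proof.
  intros E [t [s [p H]]]. exists t, s, p. intros h hp. rewrite E by exact hp. apply H, hp.
Qed.

Lemma Repr_0 n : Repr n (fun _ => 0).
Proof.
  exists (fun _ _ => 0), (fun _ _ => 0), (fun _ => 0). intros h _.
  rewrite (sum_tri_ext n _ (fun _ _ => 0)), (sum_tri_ext n (fun i j => 0 * Jij i j h) (fun _ _ => 0)),
    sum_tri_zero. 2,3: intros; ring.
  rewrite (sum_ext _ (fun _ => 0)), sum_zero. ring. intros; ring.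
Qed.

Lemma Repr_plus n F G : Repr n F -> Repr n G -> Repr n (fun h => F h + G h).
Proof.
  intros [t1 [s1 [p1 H1]]] [t2 [s2 [p2 H2]]].
  exists (fun i j => t1 i j + t2 i j), (fun i j => s1 i j + s2 i j), (fun k => p1 k + p2 k).
  intros h hp. rewrite H1, H2 by exact hp.
  rewrite (sum_tri_ext n (fun i j => (t1 i j + t2 i j) * Iij i j h)
            (fun i j => t1 i j * Iij i j h + t2 i j * Iij i j h)) by (intros; ring).
  rewrite (sum_tri_ext n (fun i j => (s1 i j + s2 i j) * Jij i j h)
            (fun i j => s1 i j * Jij i j h + s2 i j * Jij i j h)) by (intros; ring).
  rewrite <- !sum_tri_plus.
  rewrite (sum_ext (fun k => (p1 k + p2 k) * uh h ^ k)
            (fun k => p1 k * uh h ^ k + p2 k * uh h ^ k)) by (intros; ring).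
  rewrite sum_plus. ring.
Qed.

Lemma Repr_scal n c F : Repr n F -> Repr n (fun h => c * F h).
Proof.
  intros [t [s [p H]]].
  exists (fun i j => c * t i j), (fun i j => c * s i j), (fun k => c * p k).
  intros h hp. rewrite H by exact hp.
  rewrite (sum_tri_ext n (fun i j => (c * t i j) * Iij i j h)
            (fun i j => c * (t i j * Iij i j h))) by (intros; ring).
  rewrite (sum_tri_ext n (fun i j => (c * s i j) * Jij i j h)
            (fun i j => c * (s i j * Jij i j h))) by (intros; ring).
  rewrite <- !sum_tri_scal.
  rewrite (sum_ext (fun k => (c * p k) * uh h ^ k)
            (fun k => c * (p k * uh h ^ k))) by (intros; ring).
  rewrite <- sum_scal. ring.
Qed.

Lemma Repr_I n i j : (i + j <= n)%nat -> Repr n (Iij i j).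
Proof.
  intro Hij. exists (fun i' j' => if (andb (i' =? i)%nat (j' =? j)%nat) then 1 else 0),
    (fun _ _ => 0), (fun _ => 0).
  intros h _. rewrite sum_tri_delta by exact Hij.
  rewrite (sum_tri_ext n (fun i j => 0 * Jij i j h) (fun _ _ => 0)), sum_tri_zero by (intros; ring).
  rewrite (sum_ext _ (fun _ => 0)), sum_zero. ring. intros; ring.
Qed.

Lemma Repr_J n i j : (i + j <= n)%nat -> Repr n (Jij i j).
Proof.
  intro Hij. exists (fun _ _ => 0), (fun i' j' => if (andb (i' =? i)%nat (j' =? j)%nat) then 1 else 0),
    (fun _ => 0).
  intros h _. rewrite sum_tri_delta by exact Hij.
  rewrite (sum_tri_ext n (fun i j => 0 * Iij i j h) (fun _ _ => 0)), sum_tri_zero by (intros; ring).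
  rewrite (sum_ext _ (fun _ => 0)), sum_zero. ring. intros; ring.
Qed.

Lemma Repr_mono n m : (m <= phi_deg n)%nat -> Repr n (fun h => uh h ^ m).
Proof.
  intro Hm. exists (fun _ _ => 0), (fun _ _ => 0), (fun k => if (k =? m)%nat then 1 else 0).
  intros h _.
  rewrite (sum_tri_ext n (fun i j => 0 * Iij i j h) (fun _ _ => 0)), sum_tri_zero by (intros; ring).
  rewrite (sum_tri_ext n (fun i j => 0 * Jij i j h) (fun _ _ => 0)), sum_tri_zero by (intros; ring).
  rewrite (sum_ext _ (fun k => if (k =? m)%nat then uh h ^ m else 0)).
  - rewrite sum_delta. destruct (Nat.leb_spec m (phi_deg n)); [ring | lia].
  - intro k. destruct (Nat.eqb_spec k m); subst; ring.
Qed.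

Lemma Repr_sum n (F : nat -> R -> R) N : (forall i, (i <= N)%nat -> Repr n (F i)) ->
  Repr n (fun h => sum_f_R0 (fun i => F i h) N).
Proof.
  induction N as [|N IH]; intro H; simpl.
  - apply H; lia.
  - apply Repr_plus. apply IH; intros; apply H; lia. apply H; lia.
Qed.

Lemma Repr_sum_tri n (F : nat -> nat -> R -> R) : (forall i j, (i + j <= n)%nat -> Repr n (F i j)) ->
  Repr n (fun h => sum_tri n (fun i j => F i j h)).
Proof.
  intro H. unfold sum_tri. apply Repr_sum; intros i _. apply Repr_sum; intros j _.
  destruct (Nat.leb_spec (i + j) n).
  - apply H; lia.
  - apply Repr_0.
Qed.

Lemma uh_props h : 0 < h -> 0 <= uh h /\ uh h ^ 4 + uh h ^ 2 = h.
Proof.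
  intro hp. unfold uh.
  set (s := sqrt (1 + 4 * h)).
  assert (Hs1 : 1 <= s).
  { unfold s. apply Rle_trans with (sqrt 1); [rewrite sqrt_1; lra | apply sqrt_le_1_alt; lra]. }
  assert (Hs2 : s * s = 1 + 4 * h) by (unfold s; apply sqrt_sqrt; lra).
  assert (Hq : 0 <= (s - 1) / 2) by lra.
  split. apply sqrt_pos.
  assert (E : sqrt ((s - 1) / 2) ^ 2 = (s - 1) / 2) by (simpl; rewrite Rmult_1_r; apply sqrt_sqrt; exact Hq).
  replace (sqrt ((s - 1) / 2) ^ 4) with ((sqrt ((s - 1) / 2) ^ 2) ^ 2) by ring.
  rewrite E. nra.
Qed.

Lemma endpoint h : 0 < h ->
  sqrt h * cos (alpha h) = uh h /\ sqrt h * sin (alpha h) = uh h ^ 2.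
Proof.
  intro hp. destruct (uh_props h hp) as [u0 uH].
  unfold alpha. rewrite cos_atan, sin_atan.
  set (u := uh h) in *.
  assert (Q : 0 < sqrt (1 + u²)) by (apply sqrt_lt_R0; unfold Rsqr; nra).
  assert (Hq : sqrt h = u * sqrt (1 + u²)).
  { rewrite <- uH. replace (u ^ 4 + u ^ 2) with ((u * u) * (1 + u²)) by (unfold Rsqr; ring).
    rewrite sqrt_mult, sqrt_square; [reflexivity | exact u0 | nra | unfold Rsqr; nra]. }
  rewrite Hq. split; field; lra.
Qed.

Lemma I_K i j h : Iij i j h = K i j h (alpha h) (- alpha h).
Proof.
  unfold Iij, arc_int. apply Rint_is.
  eapply is_RInt_ext; [| apply is_K]. intros x _. unfold mdx. simpl. ring.
Qed.

Lemma J_K i j h : Jij i j h = K i j h (- alpha h) (alpha h - PI).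
Proof.
  unfold Jij, arc_int. apply Rint_is.
  eapply is_RInt_ext; [| apply is_K]. intros x _. unfold mdx. simpl. ring.
Qed.

Lemma neg_pow (x : R) k : (- x) ^ k = (-1) ^ k * x ^ k.
Proof. rewrite <- Rpow_mult_distr. f_equal. ring. Qed.

Lemma K_shift i j h a b : K i j h (a - PI) (b - PI) = (-1) ^ (i + j + 1) * K i j h a b.
Proof.
  pose proof (is_RInt_comp_lin (V:=R_NormedModule) (mdx i j h) 1 (- PI) a b (K i j h (a - PI) (b - PI))) as H.
  replace (1 * a + - PI) with (a - PI) in H by ring.
  replace (1 * b + - PI) with (b - PI) in H by ring.
  specialize (H (is_K i j h (a - PI) (b - PI))).
  pose proof (is_RInt_scal (V:=R_NormedModule) _ _ _ ((-1) ^ (i + j + 1)) _ (is_K i j h a b)) as H2.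
  assert (H3 : is_RInt (fun y => scal 1 (mdx i j h (1 * y + - PI))) a b (scal ((-1) ^ (i + j + 1)) (K i j h a b))).
  { eapply is_RInt_ext; [| exact H2]. intros x _. unfold scal; simpl; unfold mult; simpl.
    unfold mdx. replace (1 * x + - PI) with (x - PI) by ring.
    rewrite cos_minus, sin_minus, cos_PI, sin_PI.
    replace (sqrt h * (cos x * -1 + sin x * 0)) with (- (sqrt h * cos x)) by ring.
    replace (sqrt h * (sin x * -1 - cos x * 0)) with (- (sqrt h * sin x)) by ring.
    rewrite !neg_pow, !pow_add. simpl. ring. }
  pose proof (is_RInt_unique _ _ _ _ H) as U1.
  pose proof (is_RInt_unique _ _ _ _ H3) as U2.
  exact (eq_trans (eq_sym U1) U2).
Qed.

Lemma Ev_sign i j h t sx sy :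
  sqrt h * cos t = sx * uh h -> sqrt h * sin t = sy * uh h ^ 2 ->
  Ev i j h t = sx ^ i * sy ^ (S j) * uh h ^ (i + 2 * S j).
Proof.
  intros H1 H2. unfold Ev. rewrite H1, H2, !Rpow_mult_distr, pow_add, pow_mult. ring.
Qed.

Lemma sign_even (s : R) k : s ^ 2 = 1 -> s ^ (2 * k) = 1.
Proof. intro H. rewrite pow_mult, H. apply pow1. Qed.

Definition EP (t : R -> R) (sx sy : R) :=
  forall h, 0 < h -> sqrt h * cos (t h) = sx * uh h /\ sqrt h * sin (t h) = sy * uh h ^ 2.

Lemma Repr_Ev n i j t0 t1 sx0 sy0 sx1 sy1 : (i + j <= n)%nat ->
  sy0 ^ 2 = 1 -> sy1 ^ 2 = 1 -> EP t0 sx0 sy0 -> EP t1 sx1 sy1 ->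
  Repr n (fun h => (Ev i j h (t1 h) - Ev i j h (t0 h)) / (INR j + 1)).
Proof.
  intros Hij S0 S1 E0 E1.
  set (c := (sx1 ^ i * sy1 ^ (S j) - sx0 ^ i * sy0 ^ (S j)) / (INR j + 1)).
  apply Repr_ext with (G := fun h => c * uh h ^ (i + 2 * S j)).
  { intros h hp. destruct (E0 h hp) as [A0 B0]. destruct (E1 h hp) as [A1 B1].
    rewrite (Ev_sign i j h _ _ _ A0 B0), (Ev_sign i j h _ _ _ A1 B1). unfold c.
    field. pose proof (pos_INR j); lra. }
  destruct (Nat.leb_spec (i + 2 * S j) (phi_deg n)) as [Hle|Hgt].
  - apply Repr_scal, Repr_mono, Hle.
  - unfold phi_deg in Hgt. destruct (Nat.even n) eqn:En; [lia|].
    assert (i = 0%nat /\ j = n) as [-> ->] by lia.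
    assert (Ev2 : Nat.even (S n) = true) by (rewrite Nat.even_succ, <- Nat.negb_even, En; reflexivity).
    apply Nat.even_spec in Ev2. destruct Ev2 as [k Hk].
    assert (c = 0) as Hc.
    { unfold c. rewrite Hk, !sign_even by assumption. simpl. field. pose proof (pos_INR n); lra. }
    apply Repr_ext with (G := fun _ => 0). intros h _. rewrite Hc. ring. apply Repr_0.
Qed.

Lemma Repr_minus n F G : Repr n F -> Repr n G -> Repr n (fun h => F h - G h).
Proof.
  intros HF HG. apply Repr_ext with (G := fun h => F h + (-1) * G h).
  intros; ring. apply Repr_plus; [exact HF | apply Repr_scal, HG].
Qed.

Lemma Repr_arc n A B t0 t1 sx0 sy0 sx1 sy1 :
  sy0 ^ 2 = 1 -> sy1 ^ 2 = 1 -> EP t0 sx0 sy0 -> EP t1 sx1 sy1 ->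
  (forall i j, (i + j <= n)%nat -> Repr n (fun h => K i j h (t0 h) (t1 h))) ->
  Repr n (fun h => arc_gf (poly2 n A) (poly2 n B) h (t0 h) (t1 h)).
Proof.
  intros S0 S1 E0 E1 HK.
  apply Repr_ext with (G := fun h => sum_tri n (fun i j => B i j * K i j h (t0 h) (t1 h) - A i j * Lv i j h (t0 h) (t1 h))).
  { intros; apply arc_decomp. }
  apply (Repr_sum_tri n (fun i j h => B i j * K i j h (t0 h) (t1 h) - A i j * Lv i j h (t0 h) (t1 h))).
  intros i j Hij. apply Repr_minus; apply Repr_scal; [apply HK, Hij|].
  unfold Lv. destruct i as [|i].
  - apply Repr_ext with (G := fun h => (Ev 0 j h (t1 h) - Ev 0 j h (t0 h)) / (INR j + 1)).
    { intros h _. change (INR 0) with 0. unfold Rdiv. ring. }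
    apply (Repr_Ev n 0 j t0 t1 sx0 sy0 sx1 sy1); assumption.
  - apply Repr_minus. apply (Repr_Ev n (S i) j t0 t1 sx0 sy0 sx1 sy1); assumption.
    apply Repr_scal. simpl. apply HK. lia.
Qed.

Lemma EP1 : EP alpha 1 1.
Proof. intros h hp. destruct (endpoint h hp) as [A B]. rewrite A, B. split; ring. Qed.

Lemma EP2 : EP (fun h => - alpha h) 1 (-1).
Proof. intros h hp. destruct (endpoint h hp) as [A B]. rewrite cos_neg, sin_neg. split; [rewrite A | rewrite <- B]; ring. Qed.

Lemma EP3 : EP (fun h => alpha h - PI) (-1) (-1).
Proof.
  intros h hp. destruct (endpoint h hp) as [A B]. rewrite cos_minus, sin_minus, cos_PI, sin_PI.
  split; [rewrite <- A | rewrite <- B]; ring.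
Qed.

Lemma EP4 : EP (fun h => - PI - alpha h) (-1) 1.
Proof.
  intros h hp. destruct (endpoint h hp) as [A B]. rewrite cos_minus, sin_minus, cos_neg, sin_neg, cos_PI, sin_PI.
  split; [rewrite <- A | rewrite <- B]; ring.
Qed.

Lemma EP5 : EP (fun h => alpha h - 2 * PI) 1 1.
Proof.
  intros h hp. destruct (endpoint h hp) as [A B]. rewrite cos_minus, sin_minus, cos_2PI, sin_2PI.
  split; [rewrite <- A | rewrite <- B]; ring.
Qed.

Lemma Repr_Melnikov n a b : Repr n (Melnikov n a b).
Proof.
  apply Repr_ext with (G := fun h =>
      arc_gf (poly2 n (a 1%nat)) (poly2 n (b 1%nat)) h (alpha h) (- alpha h)
    + arc_gf (poly2 n (a 2%nat)) (poly2 n (b 2%nat)) h (- alpha h) (alpha h - PI)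
    + arc_gf (poly2 n (a 3%nat)) (poly2 n (b 3%nat)) h (alpha h - PI) (- PI - alpha h)
    + arc_gf (poly2 n (a 4%nat)) (poly2 n (b 4%nat)) h (- PI - alpha h) (alpha h - 2 * PI)).
  { intros; reflexivity. }
  assert (P1 : (1:R) ^ 2 = 1) by ring. assert (P2 : (-1:R) ^ 2 = 1) by ring.
  repeat apply Repr_plus.
  - apply (Repr_arc n _ _ alpha (fun h => - alpha h) 1 1 1 (-1) P1 P2 EP1 EP2).
    intros i j Hij. apply Repr_ext with (G := Iij i j). intros; apply eq_sym, I_K. apply Repr_I, Hij.
  - apply (Repr_arc n _ _ (fun h => - alpha h) (fun h => alpha h - PI) 1 (-1) (-1) (-1) P2 P2 EP2 EP3).
    intros i j Hij. apply Repr_ext with (G := Jij i j). intros; apply eq_sym, J_K. apply Repr_J, Hij.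
  - apply (Repr_arc n _ _ (fun h => alpha h - PI) (fun h => - PI - alpha h) (-1) (-1) (-1) 1 P2 P1 EP3 EP4).
    intros i j Hij. apply Repr_ext with (G := fun h => (-1) ^ (i + j + 1) * Iij i j h).
    + intros h _. rewrite I_K, <- K_shift. f_equal. ring.
    + apply Repr_scal, Repr_I, Hij.
  - apply (Repr_arc n _ _ (fun h => - PI - alpha h) (fun h => alpha h - 2 * PI) (-1) 1 1 1 P1 P1 EP4 EP5).
    intros i j Hij. apply Repr_ext with (G := fun h => (-1) ^ (i + j + 1) * Jij i j h).
    + intros h _. rewrite J_K, <- K_shift. f_equal; ring.
    + apply Repr_scal, Repr_J, Hij.
Qed.

Theorem lemma2p1 :
  forall (n : nat) (a b : nat -> nat -> nat -> R),
    (1 <= n)%nat ->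
    exists (tau sigma : nat -> nat -> R) (phi : nat -> R),
      forall h : R, 0 < h ->
        Melnikov n a b h =
          sum_tri n (fun i j => tau i j * Iij i j h)
          + sum_tri n (fun i j => sigma i j * Jij i j h)
          + sum_f_R0 (fun k => phi k * (uh h) ^ k) (phi_deg n).
Proof.
  intros n a b _. exact (Repr_Melnikov n a b).
Qed.
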